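(* Let $X\subseteq I$ be an itemset and let $W$ be any descendant of $X$ in the set-enumeration tree. Then $$u(W)\le SUM(X.pu)+SUM(X.rpu).$$
   Context: Let $I$ be a finite set of items. An uncertain database $D=\{T_1,\dots,T_n\}$ is a finite collection of transactions with each $T_c\subseteq I$. Each item $i\in T_c$ has a quantity $q(i,T_c)>0$ and an existence probability $p(i,T_c)\in(0,1]$. Each item $i\in I$ has an external utility $pr(i)\in\mathbb{R}$, which may be positive or negative. Utility quantities: - $u(i,T_c)=pr(i)\,q(i,T_c)$. - For $X\subseteq T_c$: $u(X,T_c)=\sum_{i\in X}u(i,T_c)$. - $u(X)=\sum_{T_c\in D,\ X\subseteq T_c}u(X,T_c)$. Fix a total processing order on $I$. The paper sorts items by ascending $RTWU$ and places all items with negative external utility after the others. The set-enumeration tree has root $\emptyset$, and the children of a node $X$ are the sets $X\cup\{i\}$ with $i$ after every item of $X$. Hence the descendants of $X$ are the itemsets $W\supsetneq X$ such that every item of $W\setminus X$ comes after every item of $X$. For $X\subseteq T_c$ define: - $pu(X,T_c)=\sum_{i\in X,\ pr(i)>0}u(i,T_c)$; - $rpu(X,T_c)=\sum u(i,T_c)$ over $i\in T_c$ with $pr(i)>0$ and $i$ after every item of $X$. Finally $SUM(X.pu)=\sum_{T_c\in D,\ X\subseteq T_c}pu(X,T_c)$ and $SUM(X.rpu)=\sum_{T_c\in D,\ X\subseteq T_c}rpu(X,T_c)$. *)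

(* Defs.v *)
From HB Require Import structures.
From mathcomp Require Import all_boot all_order all_algebra.
Set Implicit Arguments. Unset Strict Implicit. Unset Printing Implicit Defensive.
Import Order.TTheory GRing.Theory Num.Theory.
Local Open Scope ring_scope.

(* Database D = {T_0,...,T_{n-1}}, transactions
   indexed by 'I_n, T c : {set I}.  q c i = q(i,T_c), pr i = external utility.
   The total processing order on I is given by an injective rank
   rk : I -> nat; "i comes after j" means (rk j < rk i). *)

Section Utility.
Variables (R : realFieldType) (I : finType) (n : nat).
Variables (T : 'I_n -> {set I}) (q : 'I_n -> I -> R) (pr : I -> R)
          (rk : I -> nat).

Definition u_item (i : I) (c : 'I_n) : R := pr i * q c i.

Definition u_set (X : {set I}) (c : 'I_n) : R := \sum_(i in X) u_item i c.

Definition u_db (X : {set I}) : R :=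
  \sum_(c < n | X \subset T c) u_set X c.

Definition after_all (X : {set I}) (i : I) : bool :=
  [forall j in X, (rk j < rk i)%N].

Definition pu (X : {set I}) (c : 'I_n) : R :=
  \sum_(i in X | 0 < pr i) u_item i c.

Definition rpu (X : {set I}) (c : 'I_n) : R :=
  \sum_(i in T c | (0 < pr i) && after_all X i) u_item i c.

Definition SUM_pu (X : {set I}) : R := \sum_(c < n | X \subset T c) pu X c.
Definition SUM_rpu (X : {set I}) : R := \sum_(c < n | X \subset T c) rpu X c.

Definition descendant (X W : {set I}) : bool :=
  (X \proper W) && [forall i in W :\: X, after_all X i].

End Utility.

(* Main.v *)
Require Import Defs.
From HB Require Import structures.
From mathcomp Require Import all_boot all_order all_algebra.
Import Order.TTheory GRing.Theory Num.Theory.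
Local Open Scope ring_scope.

Lemma sum_mono_pred (R : realFieldType) (I : finType) (P Q : pred I) (F : I -> R) :
  (forall i, P i -> Q i) -> (forall i, Q i -> ~~ P i -> 0 <= F i) ->
  \sum_(i | P i) F i <= \sum_(i | Q i) F i.
Proof.
move=> PQ H; rewrite [X in _ <= X](bigID P) /=.
have -> : \sum_(i | Q i && P i) F i = \sum_(i | P i) F i.
  by apply: eq_bigl => i; case: (boolP (P i)) => Pi; rewrite ?andbT ?andbF ?PQ.
rewrite lerDl; apply: sumr_ge0 => i /andP[Qi nPi]; exact: H.
Qed.

Theorem lemma3 (R : realFieldType) (I : finType) (n : nat)
  (T : 'I_n -> {set I}) (q p : 'I_n -> I -> R) (pr : I -> R)
  (rk : I -> nat)
  (rk_inj : injective rk)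
  (q_pos : forall c i, i \in T c -> 0 < q c i)
  (p_range : forall c i, i \in T c -> 0 < p c i <= 1)
  (X W : {set I})
  (hW : descendant rk X W) :
  u_db T q pr W <= SUM_pu T q pr X + SUM_rpu T q pr rk X.
Proof.
move: hW => /andP[/andP[XW _] /forallP Haft].
have upos : forall c i, i \in T c -> 0 < pr i -> 0 <= u_item q pr i c.
  by move=> c i iT pi; rewrite /u_item mulr_ge0 // ltW // q_pos.
have uneg : forall c i, i \in T c -> ~~ (0 < pr i) -> u_item q pr i c <= 0.
  move=> c i iT pi; rewrite /u_item mulr_le0_ge0 //; last by rewrite ltW // q_pos.
  by rewrite leNgt.
have pu0 : forall c, X \subset T c -> 0 <= pu q pr X c.
  move=> c XT; apply: sumr_ge0 => i /andP[iX pi]; apply: upos => //.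
  exact: (subsetP XT).
have rpu0 : forall c, 0 <= rpu T q pr rk X c.
  by move=> c; apply: sumr_ge0 => i /andP[iT /andP[pi _]]; apply: upos.
rewrite /u_db /SUM_pu /SUM_rpu -big_split /=.
apply: (le_trans (y := \sum_(c < n | W \subset T c) (pu q pr X c + rpu T q pr rk X c))).
  apply: ler_sum => c WT.
  have XT : X \subset T c by apply: subset_trans XW WT.
  rewrite /u_set (big_setID X) /=.
  have -> : W :&: X = X by apply/setIidPr.
  apply: lerD.
    rewrite /pu [X in X <= _](bigID (fun i => 0 < pr i)) /= gerDl.
    apply: sumr_le0 => i /andP[iX pi]; apply: uneg => //; exact: (subsetP XT).
  rewrite /rpu.
  apply: (le_trans (y := \sum_(i in W :\: X | 0 < pr i) u_item q pr i c)).
    rewrite [X in X <= _](bigID (fun i => 0 < pr i)) /= gerDl.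
    apply: sumr_le0 => i /andP[iWX pi]; apply: uneg => //.
    by apply: (subsetP WT); move: iWX; rewrite in_setD => /andP[].
  apply: sum_mono_pred.
    move=> i /andP[iWX pi]; rewrite pi /=.
    have := Haft i; rewrite iWX /= => ->; rewrite andbT.
    by apply: (subsetP WT); move: iWX; rewrite in_setD => /andP[].
  by move=> i /andP[iT /andP[pi _]] _; apply: upos.
apply: sum_mono_pred.
  move=> c WT; exact: subset_trans XW WT.
by move=> c XT _; rewrite addr_ge0 ?pu0 ?rpu0.
Qed.
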